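(* Let $A\in\mathbb{R}_+^{n\times n}$ and let $x\in\mathbb{R}_+^n$ be a Perron eigenvector of $A$ normalized so that $\sum_{i=1}^n x_i=1$. (i) If for all $i,j,k$, $x_k<x_j$ implies $a_{i,k}\le a_{i,j}$, then for every $i$: $\frac{1}{n}\sum_{j=1}^n a_{i,j}\le\sum_{j=1}^n a_{i,j}x_j=\rho(A)x_i$. (ii) If for all $i,j,k$, $x_k<x_j$ implies $a_{i,k}\ge a_{i,j}$, then for every $i$: $\frac{1}{n}\sum_{j=1}^n a_{i,j}\ge\sum_{j=1}^n a_{i,j}x_j=\rho(A)x_i$. (iii) If one of the hypotheses of (i) or (ii) holds, then the following are equivalent: (a) $\frac{1}{n}\sum_{j=1}^n a_{i,j}=\sum_{j=1}^n a_{i,j}x_j=\rho(A)x_i$ for all $i$; (b) either $x_i=\frac1n$ for all $i$, or for each $i$ there is a constant $c_i$ with $a_{i,j}=c_i$ for all $j$.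
   Context: $\mathbb{R}_+^{n\times n}$ and $\mathbb{R}_+^n$ denote nonnegative $n\times n$ matrices and nonnegative vectors. $\rho(A)$ is the spectral radius (Perron root) of $A$; a Perron eigenvector is a nonzero nonnegative vector $x$ with $Ax=\rho(A)x$. *)

(* Defs.v *)
(* Scalars: an arbitrary real closed field R (e.g. the reals);
   complex eigenvalues live in R[i] = complex R (mathcomp-real-closed). *)
From HB Require Import structures.
From mathcomp Require Import all_boot all_order all_algebra.
From mathcomp.real_closed Require Import complex.
Set Implicit Arguments. Unset Strict Implicit. Unset Printing Implicit Defensive.
Import Order.TTheory GRing.Theory Num.Theory.
Local Open Scope ring_scope.
Local Open Scope complex_scope.

Definition cmx (R : rcfType) (n : nat) (A : 'M[R]_n) : 'M[R[i]]_n :=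
  map_mx (fun a : R => a%:C) A.

Definition spectral_radius_of (R : rcfType) (n : nat) (A : 'M[R]_n) (r : R) : Prop :=
  (exists2 l : R[i], eigenvalue (cmx A) l & `|l| = r%:C) /\
  (forall l : R[i], eigenvalue (cmx A) l -> `|l| <= r%:C).

Definition perron_eigenvector (R : rcfType) (n : nat) (A : 'M[R]_n) (r : R)
  (x : 'cV[R]_n) : Prop :=
  spectral_radius_of A r /\ x != 0 /\ (forall i, 0 <= x i 0) /\ A *m x = r *: x.

(* Main.v *)
Require Import Defs.
From HB Require Import structures.
From mathcomp Require Import all_boot all_order all_algebra ring lra.
From mathcomp.real_closed Require Import complex.
Import Order.TTheory GRing.Theory Num.Theory.
Local Open Scope ring_scope.



Lemma cheb_id (R : comNzRingType) n (a x : 'I_n -> R) :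
  \sum_j \sum_k (a j - a k) * (x j - x k) =
  (n%:R * \sum_j a j * x j - (\sum_j a j) * (\sum_j x j)) *+ 2.
Proof.
have E j k : (a j - a k) * (x j - x k) = (a j * x j + a k * x k) - (a j * x k + a k * x j) by ring.
under eq_bigr do under eq_bigr do rewrite E.
rewrite (eq_bigr (fun j => \sum_k (a j * x j + a k * x k) - \sum_k (a j * x k + a k * x j)));
  last by move=> j _; rewrite sumrB.
rewrite sumrB.
under eq_bigr do rewrite big_split /=.
under [X in _ - X]eq_bigr do rewrite big_split /=.
rewrite !big_split /=.
rewrite [\sum_j \sum_k a k * x j]exchange_big /=.
under eq_bigr do rewrite sumr_const card_ord.
under [\sum_j \sum_k a j * x k]eq_bigr do rewrite -mulr_sumr.
rewrite -mulr_suml sumrMnl -mulr_natl.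
set T := \sum_j a j * x j. set P := (\sum_j a j) * _.
rewrite sumr_const card_ord -mulr_natl mulr2n. ring.
Qed.

Lemma cheb_all (R : realFieldType) n (a x : 'I_n -> R) :
  (forall j k, 0 <= (a j - a k) * (x j - x k)) ->
  0 <= n%:R * \sum_j a j * x j - (\sum_j a j) * (\sum_j x j) /\
  (n%:R * \sum_j a j * x j - (\sum_j a j) * (\sum_j x j) = 0 ->
    forall j k, (a j - a k) * (x j - x k) = 0).
Proof.
move=> H; have S0 : 0 <= \sum_j \sum_k (a j - a k) * (x j - x k).
  by apply: sumr_ge0 => j _; apply: sumr_ge0.
rewrite cheb_id in S0; split.
  by rewrite pmulrn_lge0 in S0.
move=> D0 j k.
have : \sum_j \sum_k (a j - a k) * (x j - x k) = 0 by rewrite cheb_id D0 mul0rn.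
move/psumr_eq0P => /(_ (fun j _ => sumr_ge0 _ (fun k _ => H j k))) /(_ j isT).
by move/psumr_eq0P => /(_ (fun k _ => H j k)) /(_ k isT).
Qed.

Lemma cheb1 (R : realFieldType) n (a x : 'I_n -> R) :
  (forall j k, x k < x j -> a k <= a j) -> forall j k, 0 <= (a j - a k) * (x j - x k).
Proof.
move=> H j k; case: (ltgtP (x k) (x j)) => h.
- by apply: mulr_ge0; rewrite subr_ge0 ?(H _ _ h) // ltW.
- by apply: mulr_le0; rewrite subr_le0 ?(H _ _ h) // ltW.
- by rewrite h subrr mulr0.
Qed.

Lemma row_res (R : realFieldType) n (a x : 'I_n -> R) :
  \sum_j x j = 1 -> (0 < n)%N ->
  ((forall j k, x k < x j -> a k <= a j) ->
     n%:R^-1 * \sum_j a j <= \sum_j a j * x j /\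
     (n%:R^-1 * \sum_j a j = \sum_j a j * x j -> forall j k, (a j - a k) * (x j - x k) = 0)) /\
  ((forall j k, x k < x j -> a j <= a k) ->
     \sum_j a j * x j <= n%:R^-1 * \sum_j a j /\
     (n%:R^-1 * \sum_j a j = \sum_j a j * x j -> forall j k, (a j - a k) * (x j - x k) = 0)).
Proof.
move=> Sx n0.
have np : 0 < n%:R :> R by rewrite ltr0n.
have nz : n%:R != 0 :> R by rewrite gt_eqF.
split=> H.
  have [D1 D2] := @cheb_all _ _ _ _ (@cheb1 _ _ _ _ H); rewrite Sx mulr1 in D1 D2.
  split.
    by rewrite -(ler_pM2l np) mulrA mulfV // mul1r -subr_ge0.
  by move=> E; apply: D2; rewrite -E mulrA mulfV // mul1r subrr.
have H' : forall j k, x k < x j -> - a k <= - a j by move=> j k h; rewrite lerN2 H.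
have [D1 D2] := @cheb_all _ _ _ _ (@cheb1 _ _ _ _ H'); rewrite Sx mulr1 in D1 D2.
have E1 : \sum_j - a j * x j = - \sum_j a j * x j.
  by rewrite -sumrN; apply: eq_bigr => j _; rewrite mulNr.
rewrite E1 sumrN in D1 D2.
split.
  rewrite -(ler_pM2l np) mulrA mulfV // mul1r -subr_ge0.
  by move: D1; rewrite mulrN opprK addrC.
move=> E j k; have := D2 _ j k.
have -> : (- a j - - a k) * (x j - x k) = - ((a j - a k) * (x j - x k)) by ring.
rewrite -E mulrN mulrA mulfV // mul1r subrr => /(_ erefl) /eqP.
by rewrite oppr_eq0 => /eqP.
Qed.

Theorem lemma2p2 (R : rcfType) (n : nat) (A : 'M[R]_n) (x : 'cV[R]_n) (rho : R) :
  (forall i j, 0 <= A i j) ->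
  perron_eigenvector A rho x ->
  \sum_(i < n) x i 0 = 1 ->
  let H1 := forall i j k : 'I_n, x k 0 < x j 0 -> A i k <= A i j in
  let H2 := forall i j k : 'I_n, x k 0 < x j 0 -> A i k >= A i j in
  (H1 -> forall i : 'I_n,
     (n%:R)^-1 * \sum_(j < n) A i j <= \sum_(j < n) A i j * x j 0 /\
     \sum_(j < n) A i j * x j 0 = rho * x i 0) /\
  (H2 -> forall i : 'I_n,
     (n%:R)^-1 * \sum_(j < n) A i j >= \sum_(j < n) A i j * x j 0 /\
     \sum_(j < n) A i j * x j 0 = rho * x i 0) /\
  (H1 \/ H2 ->
     ((forall i : 'I_n,
         (n%:R)^-1 * \sum_(j < n) A i j = \sum_(j < n) A i j * x j 0 /\
         \sum_(j < n) A i j * x j 0 = rho * x i 0)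
      <->
      ((forall i : 'I_n, x i 0 = (n%:R)^-1) \/
       (forall i : 'I_n, exists c : R, forall j : 'I_n, A i j = c)))).
Proof.
move=> A0 [_ [_ [_ Ax]]] Sx H1 H2.
have eig i : \sum_j A i j * x j 0 = rho * x i 0.
  by have := congr1 (fun M : 'M_(n,1) => M i 0) Ax; rewrite !mxE.
have RR i := @row_res R n (fun j => A i j) (fun j => x j 0) Sx (leq_ltn_trans (leq0n _) (ltn_ord i)).
split.
  move=> h i; have [P _] := RR i; split; last exact: eig.
  by apply: (P _).1 => j k; apply: h.
split.
  move=> h i; have [_ P] := RR i; split; last exact: eig.
  by apply: (P _).1 => j k; apply: h.
move=> H12; split.
  move=> Ha.
  have Z i j k : (A i j - A i k) * (x j 0 - x k 0) = 0.
    have [E _] := Ha i; case: H12 => h.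
      by have [P _] := RR i; apply: (P _).2 => // j' k'; apply: h.
    by have [_ P] := RR i; apply: (P _).2 => // j' k'; apply: h.
  case: (boolP [exists j, exists k, x j 0 != x k 0]).
    move=> /existsP [j0 /existsP [k0 ne]]; right => i; exists (A i j0) => j.
    have Z' j' k' : x j' 0 != x k' 0 -> A i j' = A i k'.
      by move=> h; move/eqP: (Z i j' k'); rewrite mulf_eq0 !subr_eq0 (negbTE h) orbF => /eqP.
    case: (eqVneq (x j 0) (x j0 0)) => e; last exact: Z'.
    by rewrite (Z' j k0) ?e // (Z' _ _ ne).
  move=> nE; left => i.
  have nz : n%:R != 0 :> R by rewrite pnatr_eq0 -lt0n (leq_ltn_trans (leq0n _) (ltn_ord i)).
  have Ex j : x j 0 = x i 0.
    by apply/eqP; move/existsPn: nE => /(_ j) /existsPn /(_ i); rewrite negbK.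
  have h : n%:R * x i 0 = 1.
    rewrite -[RHS]Sx (eq_bigr (fun _ => x i 0)); last by move=> j _; exact: Ex.
    by rewrite sumr_const card_ord mulr_natl.
  by apply: (mulfI nz); rewrite h mulfV.
move=> Hb i; split; last exact: eig.
have nz : n%:R != 0 :> R by rewrite pnatr_eq0 -lt0n (leq_ltn_trans (leq0n _) (ltn_ord i)).
case: Hb => [Hx|Hc].
  rewrite [RHS](eq_bigr (fun j => A i j * n%:R^-1)); last by move=> j _; rewrite Hx.
  by rewrite -mulr_suml mulrC.
have [c Hc'] := Hc i.
rewrite [in LHS](eq_bigr (fun j => c)) // [RHS](eq_bigr (fun j => c * x j 0)); last by move=> j _; rewrite Hc'.
by rewrite -mulr_sumr Sx mulr1 sumr_const card_ord -[c *+ n]mulr_natl mulKf.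
Qed.
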